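(* For every nonnegative integer $n$, $$\sum_{k=0}^{\infty}(-1)^k(4k+1)\,\frac{(-4n)_k\,(-3n+\tfrac18)_k\,(\tfrac12)_k}{k!\,(3n+\tfrac{11}{8})_k\,(4n+\tfrac32)_k}=\left(\frac{2^8 3^3}{7^7}\right)^n\frac{(\tfrac{11}{24})_n(\tfrac38)_n(\tfrac78)_n(\tfrac{19}{24})_n(\tfrac98)_n^2}{(\tfrac{11}{56})_n(\tfrac{43}{56})_n(\tfrac{19}{56})_n(\tfrac{51}{56})_n(\tfrac{27}{56})_n(\tfrac{59}{56})_n}.$$ (The sum is finite, since $(-4n)_k=0$ for $k>4n$.)
   Context: $(a)_j=\Gamma(a+j)/\Gamma(a)=a(a+1)\cdots(a+j-1)$ denotes the rising factorial (Pochhammer symbol), with $(a)_0=1$. *)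

(* Defs.v *)
From HB Require Import structures.
From mathcomp Require Import all_boot all_order all_algebra.
Set Implicit Arguments. Unset Strict Implicit. Unset Printing Implicit Defensive.
Import Order.TTheory GRing.Theory Num.Theory.
Local Open Scope ring_scope.

Definition poch (a : rat) (j : nat) : rat := \prod_(i < j) (a + i%:R).

(* Main.v *)
From Stdlib Require Import ZArith Lia Ring Field.
Require Import Defs.
From HB Require Import structures.
From mathcomp Require Import all_boot all_order all_algebra.
Import Order.TTheory GRing.Theory Num.Theory.
Local Open Scope ring_scope.

Definition zr (z : Z) : rat :=
  if Z.leb 0 z then (Z.to_nat z)%:R else - (Z.to_nat (Z.opp z))%:R.

Lemma zrE z : zr z = (Z.to_nat z)%:R - (Z.to_nat (Z.opp z))%:R.
Proof.
rewrite /zr; case: (Z.leb_spec0 0 z) => h.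
  by rewrite (_ : Z.to_nat (Z.opp z) = O) ?subr0 //; lia.
by rewrite (_ : Z.to_nat z = O) ?sub0r //; lia.
Qed.

Lemma natr_eq_diff (a b c d : nat) : (a + d = c + b)%N ->
  (a%:R - b%:R : rat) = c%:R - d%:R.
Proof.
move=> H; apply/eqP; rewrite subr_eq addrAC eq_sym subr_eq -!natrD H addnC //.
Qed.

Lemma natr_sum2 (p q r s : nat) :
  (p%:R - q%:R) + (r%:R - s%:R) = ((p + r)%:R - (q + s)%:R : rat).
Proof. by rewrite !natrD opprD addrACA. Qed.

Lemma zr_add a b : zr (Z.add a b) = zr a + zr b.
Proof.
rewrite !zrE natr_sum2; apply: natr_eq_diff.
rewrite -!plusE; lia.
Qed.

Lemma zr_mul a b : zr (Z.mul a b) = zr a * zr b.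
Proof.
rewrite !zrE mulrBl !mulrBr -!natrM opprB [RHS]natr_sum2.
apply: natr_eq_diff. rewrite -!plusE -!multE. nia.
Qed.

Lemma zr0 : zr Z0 = 0. Proof. by []. Qed.
Lemma zr1 : zr (Zpos xH) = 1. Proof. by []. Qed.
Lemma zr_opp a : zr (Z.opp a) = - zr a.
Proof.
apply/eqP; rewrite -subr_eq0 opprK -zr_add.
by rewrite Z.add_opp_diag_l.
Qed.
Lemma zr_sub a b : zr (Z.sub a b) = zr a - zr b.
Proof. by rewrite -zr_opp -zr_add Z.add_opp_r. Qed.
Lemma zr_eq a b : Zeq_bool a b = true -> zr a = zr b.
Proof. by move/Zeq_bool_eq => ->. Qed.

Definition ra (x y : rat) : rat := x + y.
Definition rm (x y : rat) : rat := x * y.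
Definition ro (x : rat) : rat := - x.
Definition rs (x y : rat) : rat := x - y.
Definition ri (x : rat) : rat := x^-1.
Definition rd (x y : rat) : rat := x / y.
Definition rz : rat := 0.
Definition r1 : rat := 1.
Definition rn (n : nat) : rat := n%:R.
Definition rx (x : rat) (n : nat) : rat := x ^+ n.

Lemma rat_ring_th : ring_theory rz r1 ra rm rs ro (@eq rat).
Proof.
constructor; rewrite /rz /r1 /ra /rm /rs /ro.
- exact: add0r.
- exact: addrC.
- exact: addrA.
- exact: mul1r.
- exact: mulrC.
- exact: mulrA.
- exact: mulrDl.
- by [].
- exact: subrr.
Qed.

Lemma rat_field_th : field_theory rz r1 ra rm rs ro rd ri (@eq rat).
Proof.
constructor.
- exact: rat_ring_th.
- by [].
- by [].
- by rewrite /rz /rm /ri => p hp; rewrite mulVf //; apply/eqP.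
Qed.

Lemma zr_morph : ring_morph rz r1 ra rm rs ro (@eq rat)
  Z0 (Zpos xH) Z.add Z.mul Z.sub Z.opp Zeq_bool zr.
Proof.
constructor.
- exact: zr0.
- exact: zr1.
- exact: zr_add.
- exact: zr_sub.
- exact: zr_mul.
- exact: zr_opp.
- exact: zr_eq.
Qed.

Lemma pow_pos_exp (r : rat) p : pow_pos rm r p = r ^+ Pos.to_nat p.
Proof.
elim: p => [p IH|p IH|] /=; rewrite /rm.
- rewrite Pos2Nat.inj_xI IH exprS -exprD. congr (_ * _ ^+ _). rewrite -?plusE -?multE; lia.
- rewrite Pos2Nat.inj_xO IH -exprD. congr (_ ^+ _). rewrite -?plusE -?multE; lia.
- by rewrite expr1.
Qed.

Lemma rat_pow_th : power_theory r1 rm (@eq rat) N.to_nat rx.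
Proof.
constructor => r n; case: n => [|p] //=.
by rewrite pow_pos_exp.
Qed.

Ltac ratcst t :=
  match t with
  | zr ?z => match isZcst z with true => z | _ => constr:(InitialRing.NotConstant) end
  | rn ?n => match isnatcst n with
               | true => let z := eval vm_compute in (Z.of_nat n) in z
               | _ => constr:(InitialRing.NotConstant) end
  | rz => constr:(Z0)
  | r1 => constr:(Zpos xH)
  | _ => constr:(InitialRing.NotConstant)
  end.

Ltac ratpow t :=
  match isnatcst t with
  | false => constr:(InitialRing.NotConstant)
  | _ => constr:(N.of_nat t)
  end.

Add Field ratF : rat_field_th (morphism zr_morph, constants [ratcst], power_tac rat_pow_th [ratpow]).

Ltac canon t :=
  lazymatch t with
  | @Algebra.add _ ?x ?y => let x' := canon x in let y' := canon y in constr:(ra x' y')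
  | @GRing.mul _ ?x ?y => let x' := canon x in let y' := canon y in constr:(rm x' y')
  | @Algebra.opp _ ?x => let x' := canon x in constr:(ro x')
  | @GRing.inv _ ?x => let x' := canon x in constr:(ri x')
  | @GRing.exp _ ?x ?n => let x' := canon x in constr:(rx x' n)
  | @Algebra.natmul _ (GRing.one _) ?n => constr:(rn n)
  | @Algebra.zero _ => constr:(rz)
  | GRing.one _ => constr:(r1)
  | _ => t
  end.

Ltac to_rat := match goal with |- @eq _ ?a ?b =>
  let a' := canon a in let b' := canon b in change (@eq rat a' b') end.
Ltac rring := to_rat; ring.
Ltac rfield := to_rat; field.


Lemma ra_ge0 a b : 0 <= a -> 0 <= b -> 0 <= ra a b.
Proof. exact: addr_ge0. Qed.
Lemma ra_gt0l a b : 0 < a -> 0 <= b -> 0 < ra a b.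
Proof. by move=> ha hb; rewrite /ra; apply: (lt_le_trans ha); rewrite lerDl. Qed.
Lemma ra_gt0r a b : 0 <= a -> 0 < b -> 0 < ra a b.
Proof. by move=> ha hb; rewrite /ra; apply: (lt_le_trans hb); rewrite lerDr. Qed.
Lemma rm_ge0 a b : 0 <= a -> 0 <= b -> 0 <= rm a b.
Proof. exact: mulr_ge0. Qed.
Lemma rm_gt0 a b : 0 < a -> 0 < b -> 0 < rm a b.
Proof. exact: mulr_gt0. Qed.
Lemma rx_ge0 a n : 0 <= a -> 0 <= rx a n.
Proof. exact: exprn_ge0. Qed.
Lemma rx_gt0 a n : 0 < a -> 0 < rx a n.
Proof. exact: exprn_gt0. Qed.
Lemma ri_ge0 a : 0 <= a -> 0 <= ri a.
Proof. by rewrite /ri invr_ge0. Qed.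
Lemma ri_gt0 a : 0 < a -> 0 < ri a.
Proof. by rewrite /ri invr_gt0. Qed.
Lemma rn_ge0 n : 0 <= rn n.
Proof. exact: ler0n. Qed.
Lemma rn_gt0 n : (0 < n)%N -> 0 < rn n.
Proof. by rewrite /rn ltr0n. Qed.
Lemma r1_gt0 : 0 < r1. Proof. by []. Qed.
Lemma zr_ge0 z : Z.leb 0 z = true -> 0 <= zr z.
Proof. by rewrite /zr => ->. Qed.
Lemma zr_gt0 z : Z.ltb 0 z = true -> 0 < zr z.
Proof.
move=> h; rewrite /zr (_ : Z.leb 0 z = true); last by apply/Z.leb_le; move/Z.ltb_lt: h; lia.
rewrite ltr0n; apply/ssrnat.ltP; move/Z.ltb_lt: h; lia.
Qed.
Lemma pos_neq0 e : 0 < e -> e <> rz.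
Proof. by move=> h; apply/eqP; rewrite /rz gt_eqF. Qed.

Ltac nonneg := lazymatch goal with
 | |- is_true (@Order.le _ _ _ (ra _ _)) => apply: ra_ge0; nonneg
 | |- is_true (@Order.le _ _ _ (rm _ _)) => apply: rm_ge0; nonneg
 | |- is_true (@Order.le _ _ _ (rx _ _)) => apply: rx_ge0; nonneg
 | |- is_true (@Order.le _ _ _ (ri _)) => apply: ri_ge0; nonneg
 | |- is_true (@Order.le _ _ _ (zr _)) => apply: zr_ge0; reflexivity
 | |- is_true (@Order.le _ _ _ (rn _)) => apply: rn_ge0
 | |- is_true (@Order.le _ _ _ r1) => apply: ltW; apply: r1_gt0
 | |- _ => first [assumption | apply: ltW; assumption]
 end.
Ltac pos := lazymatch goal with
 | |- is_true (@Order.lt _ _ _ (ra _ _)) =>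
     first [apply: ra_gt0l; [pos|nonneg] | apply: ra_gt0r; [nonneg|pos]]
 | |- is_true (@Order.lt _ _ _ (rm _ _)) => apply: rm_gt0; pos
 | |- is_true (@Order.lt _ _ _ (rx _ _)) => apply: rx_gt0; pos
 | |- is_true (@Order.lt _ _ _ (ri _)) => apply: ri_gt0; pos
 | |- is_true (@Order.lt _ _ _ (zr _)) => apply: zr_gt0; reflexivity
 | |- is_true (@Order.lt _ _ _ (rn _)) => first [apply: rn_gt0; reflexivity | assumption]
 | |- is_true (@Order.lt _ _ _ r1) => apply: r1_gt0
 | |- _ => assumption
 end.
Ltac nz := repeat split; try (apply: pos_neq0; pos); try assumption.

Definition yv (X K : rat) : rat :=
  ((((((((((((((((((((zr (-474989023199232)) * X + zr (-2256197860196352)) * X + zr (-4343345807622144)) * X + zr (-4321493014020096)) * X + zr (-2334319020343296)) * X + zr (-646470961201152)) * X + zr (-71573415395328))) * K + (((((((zr 1424967069597696) * X + zr 6768593580589056) * X + zr 13030037422866432) * X + zr 12964479042060288) * X + zr 7002957061029888) * X + zr 1939412883603456) * X + zr 214720246185984)) * K + (((((((((zr 48923869389520896) * X + zr 283568446849941504) * X + zr 705602791032225792) * X + zr 984990344917549056) * X + zr 844452014195736576) * X + zr 455789449939255296) * X + zr 151399252893892608) * X + zr 28308196288364544) * X + zr 2280284281110528)) * K + (((((((((zr (-122309673473802240)) * X + zr (-708921117124853760)) * X + zr (-1767272527115059200)) * X + zr (-2477987222582722560)) * X + zr (-2140990537916743680)) * X + zr (-1169183889319526400)) * X + zr (-394546575499591680))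 * X + zr (-75214978579169280)) * X + zr (-6192777933619200))) * K + (((((((((((zr (-2252872937033957376)) * X + zr (-15377413384307736576)) * X + zr (-46534162505288122368)) * X + zr (-82275303642925891584)) * X + zr (-94203296824650891264)) * X + zr (-73052588454747045888)) * X + zr (-38892459554714419200)) * X + zr (-14048256895135776768)) * X + zr (-3297193378521808896)) * X + zr (-454322293731753984)) * X + zr (-27918996515536896))) * K + (((((((((((zr 4505745874067914752) * X + zr 30754826768615473152) * X + zr 93251789520786948096) * X + zr 165613988961539063808) * X + zr 191058482104834719744) * X + zr 149826811151454830592) * X + zr 81005363067032174592) * X + zr 29859202703592259584) * X + zr 7191021153272463360) * X + zr 1022800401689739264) * X + zr 65274780100755456)) * K + (((((((((((((zr 62248736457328951296) * X + zr 488397250840611520512) * X + zr 1733079794117957910528) * X + zr 3679556220724992540672) * X + zr 5208409425177678446592) * X + zr 5180908123315029147648) * X + zr 3715488135492082335744) * X + zr 1936605610077667196928) * X + zr 728482848169981378560) * X + zr 192956580978753011712) * X + zr 34174038964256538624) * X + zr 3634671700574281728) * X + zr 175589186396633856)) * K + (((((((((((((zr (-93373104685993426944)) * X + zr (-732595876260917280768)) * X + zr (-2603562218816746291200)) * X + zr (-5546244804510027350016)) * X + zr (-7894241559886493122560)) * X + zr (-7916460517107135676416)) * X + zr (-5740872529034436673536)) * X + zr (-3036658509871973400576)) * X + zr (-1164168214492510420992)) * X + zr (-315870812874554474496)) * X + zr (-57657974064811720704)) * X + zr (-6367035170806345728)) * X + zr (-322161721433000064))) * K + (((((((((((((((zr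 (-1187683453124380459008)) * X + zr (-10559848853740594397184)) * X + zr (-43028520671658142334976)) * X + zr (-106512154597395227738112)) * X + zr (-178962196280195193765888)) * X + zr (-215935425753863864451072)) * X + zr (-192980605927254248128512)) * X + zr (-129788907540332358402048)) * X + zr (-66020808636567021158400)) * X + zr (-25281081976838064439296)) * X + zr (-7174651265240487690240)) * X + zr (-1463421775357146611712)) * X + zr (-202803527228765414400)) * X + zr (-17089322389795426176)) * X + zr (-660362144042484576))) * K + (((((((((((((((zr 1187683453124380459008) * X + zr 10559848853740594397184) * X + zr 43067426131943972929536) * X + zr 106817402879170609938432) * X + zr 180047342415338822172672) * X + zr 218248603628528254058496) * X + zr 196276676675703473700864) * X + zr 133099530929607020642304) * X + zr 68426825462532513202176) * X + zr 26557358810117555355648) * X + zr 7665695181565858283520) * X + zr 1597248663115618566144) * X + zr 227364508416169718784) * X + zr 19819225042075550592) * X + zr 799553951462629440)) * K + (((((((((((((((((zr 17515626821075538542592) * X + zr 176197592346183340130304) * X + zr 820223265500945757241344) * X + zr 2344961963681097556426752) * X + zr 4607328844843157513306112) * X + zr 6595202162964630085828608) * X + zr 7113393626436320064700416) * X + zr 5895562220588206601011200) * X + zr 3793674311212699295416320) * X + zr 1901161924926321098489856) * X + zr 739345004180533760753664) * X + zr 220717785425153219690496) * X + zr 49571754560809442758656) * X + zr 8094666328586090004480) * X + zr 905996456129913819840) * X + zr 62073758352525550704) * X + zr 1960312798466247456)) * K + (((((((((((((((((zr (-8757813410537769271296)) * X + zr (-88098796173091670065152)) * X + zr (-410260093182113426178048))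 * X + zr (-1173800962947266352513024)) * X + zr (-2309048823324578899034112)) * X + zr (-3310960888049255753711616)) * X + zr (-3579229863193569939947520)) * X + zr (-2975120039221744354983936)) * X + zr (-1921454214860261591875584)) * X + zr (-967301299076944480960512)) * X + zr (-378286155648906835132416)) * X + zr (-113710587506706082922496)) * X + zr (-25756429401378229266432)) * X + zr (-4250358707178204887040)) * X + zr (-482038590189362436576)) * X + zr (-33583358853115453224)) * X + zr (-1083633912738816516))) * K + (((((((((((((((((((zr (-223425078338426127777792)) * X + zr (-2576806699658070177349632)) * X + zr (-13870823529803994768605184)) * X + zr (-46289963829261694427725824)) * X + zr (-107285715753484187445755904)) * X + zr (-183319315324928614817857536)) * X + zr (-239239324979993343726452736)) * X + zr (-243727278752090005451046912)) * X + zr (-196415636916035153232396288)) * X + zr (-126095814532145898539974656)) * X + zr (-64612595569328106117267456)) * X + zr (-26350917624759638375399424)) * X + zr (-8485782730077106853167104)) * X + zr (-2127440242120745154988032)) * X + zr (-405884505001424259389184)) * X + zr (-56829237542125213825440)) * X + zr (-5495456472632281295712)) * X + zr (-327305465225844861294)) * X + zr (-9029467139127334515))) / (zr 1792 * ((56*X+11)*(56*X+43)*(56*X+19)*(56*X+51)*(56*X+27)*(56*X+59)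
   *(4*X+1)*(4*X+2)*(4*X+3)*(4*X+4)*(24*X+23)*(24*X+15)*(24*X+7))).

Definition rfun (X : rat) : rat := (2 ^+ 8 * 3 ^+ 3) / 7 ^+ 7 *
  ((11/24 + X) * (3/8 + X) * (7/8 + X) * (19/24 + X) * (9/8 + X) ^+ 2) /
  ((11/56 + X) * (43/56 + X) * (19/56 + X) * (51/56 + X) * (27/56 + X) * (59/56 + X)).

Definition pp1 (X K : rat) : rat :=
  (4*K+1) * ((K-4*X-4)*(K-4*X-3)*(K-4*X-2)*(K-4*X-1))
   * (zr (-512) * ((K-3*X-3+1/8)*(K-3*X-2+1/8)*(K-3*X-1+1/8)))
   * ((3*X+11/8+K)*(3*X+19/8+K)*(3*X+27/8+K))
   * ((4*X+3/2+K)*(4*X+5/2+K)*(4*X+7/2+K)*(4*X+9/2+K))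
   / (((4*X+1)*(4*X+2)*(4*X+3)*(4*X+4)) * ((24*X+23)*(24*X+15)*(24*X+7))).
Definition pp2 (X K : rat) : rat :=
  (4*K+1) * ((3*X+11/8)*(3*X+19/8)*(3*X+27/8)) * ((4*X+3/2)*(4*X+5/2)*(4*X+7/2)*(4*X+9/2)).
Definition aa (X K : rat) : rat := - ((K-4*X-4)*(K-3*X-3+1/8)*(K+1/2)).
Definition bmm (X K : rat) : rat := K*(K+3*X+27/8)*(K+4*X+9/2).

Lemma PL (X K : rat) : 0 <= X -> 0 <= K ->
  pp2 X K - rfun X * pp1 X K = aa X K * yv X (K + 1) - bmm X K * yv X K.
Proof.
move=> hX hK; rewrite /pp2 /rfun /pp1 /aa /bmm /yv.
rfield.
Time nz.
Qed.

Ltac canon t ::=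
  lazymatch t with
  | @Algebra.add _ ?x ?y => let x' := canon x in let y' := canon y in constr:(ra x' y')
  | @GRing.mul _ ?x ?y => let x' := canon x in let y' := canon y in constr:(rm x' y')
  | @Algebra.opp _ ?x => let x' := canon x in constr:(ro x')
  | @GRing.inv _ ?x => let x' := canon x in constr:(ri x')
  | @GRing.exp _ ?x ?n => let x' := canon x in constr:(rx x' n)
  | @Algebra.natmul _ (GRing.one _) ?n => constr:(rn n)
  | @Algebra.zero _ => constr:(rz)
  | GRing.one _ => constr:(r1)
  | poch ?a ?k => let a' := canon a in constr:(poch a' k)
  | yv ?a ?b => let a' := canon a in let b' := canon b in constr:(yv a' b')
  | rfun ?a => let a' := canon a in constr:(rfun a')
  | _ => t
  end.

Lemma zr_neq0 z : Z.eqb z 0 = false -> zr z <> rz.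
Proof.
move=> h e.
have e2 : ((Z.to_nat z)%:R : rat) = (Z.to_nat (Z.opp z))%:R.
  by apply/eqP; rewrite -subr_eq0 -zrE e.
move/eqP: e2; rewrite eqr_nat => /eqP e3.
move/Z.eqb_neq: h; lia.
Qed.

Lemma ro_neq0 e : e <> rz -> ro e <> rz.
Proof. by rewrite /ro /rz => h /eqP; rewrite oppr_eq0 => /eqP. Qed.
Ltac nz1 := first [apply: pos_neq0; pos | apply: zr_neq0; reflexivity | assumption
  | apply: ro_neq0; apply: pos_neq0; pos].
Ltac nz ::= repeat split; nz1.

Ltac posc := match goal with |- is_true (@Order.lt ?d ?T ?z ?e) =>
  let e' := canon e in change (is_true (@Order.lt d T z e')); pos end.

Lemma poch0 a : poch a 0 = 1.
Proof. by rewrite /poch big_ord0. Qed.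
Lemma poch_S a k : poch a k.+1 = poch a k * (a + k%:R).
Proof. by rewrite /poch big_ord_recr. Qed.
Lemma poch3 a : poch a 3 = a * (a + 1) * (a + 2).
Proof. rewrite !poch_S poch0; rring. Qed.
Lemma poch4 a : poch a 4 = a * (a + 1) * (a + 2) * (a + 3).
Proof. rewrite !poch_S poch0; rring. Qed.
Lemma poch_add a m k : poch a (m + k) = poch a m * poch (a + m%:R) k.
Proof.
elim: k => [|k IH]; first by rewrite addn0 poch0 mulr1.
rewrite addnS !poch_S IH natrD; rring.
Qed.
Lemma poch_rel b m k : poch b m * poch (b + m%:R) k = poch b k * poch (b + k%:R) m.
Proof. by rewrite -!poch_add addnC. Qed.
Lemma poch_gt0 a k : 0 < a -> 0 < poch a k.
Proof.
move=> ha; rewrite /poch; apply: prodr_gt0 => i _.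
by apply: (lt_le_trans ha); rewrite lerDl ler0n.
Qed.
Lemma poch_zero a k i : (i < k)%N -> a + i%:R = 0 -> poch a k = 0.
Proof. by move=> hik h; rewrite /poch (bigD1 (Ordinal hik)) //= h mul0r. Qed.
Lemma poch_solveL b m k : poch b m != 0 ->
  poch (b + m%:R) k = poch b k * poch (b + k%:R) m / poch b m.
Proof. by move=> h; rewrite -poch_rel mulrC mulKf. Qed.
Lemma poch_solveR b m k : poch (b + k%:R) m != 0 ->
  poch b k = poch b m * poch (b + m%:R) k / poch (b + k%:R) m.
Proof. by move=> h; rewrite poch_rel mulfK. Qed.

Lemma gt0_neq0 (x : rat) : 0 < x -> x != 0.
Proof. by move=> h; rewrite gt_eqF. Qed.

Lemma R1 (X : rat) k : 0 <= X -> poch (-(4*X)) k =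
  poch (-(4*X) - 4) k * poch (-(4*X) - 4 + k%:R) 4 / ((4*X+1)*(4*X+2)*(4*X+3)*(4*X+4)).
Proof.
move=> hX.
have c : poch (-(4*X)-4) 4 = (4*X+1)*(4*X+2)*(4*X+3)*(4*X+4) by rewrite poch4; rring.
have e : -(4*X) = -(4*X) - 4 + 4%:R by rring.
rewrite {1}e poch_solveL c //; apply: gt0_neq0; posc.
Qed.

Lemma R2 (X : rat) k : 0 <= X -> poch (-(3*X) + 1/8) k =
  poch (-(3*X) - 3 + 1/8) k * poch (-(3*X) - 3 + 1/8 + k%:R) 3 * zr (-512)
    / ((24*X+23)*(24*X+15)*(24*X+7)).
Proof.
move=> hX.
have c : poch (-(3*X) - 3 + 1/8) 3 = - ((24*X+23)*(24*X+15)*(24*X+7)) / 512.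
  rewrite poch3; rfield; nz.
have e : -(3*X) + 1/8 = -(3*X) - 3 + 1/8 + 3%:R by rring.
have hp : 0 < (24*X+23)*(24*X+15)*(24*X+7) by posc.
have hnz : poch (-(3*X) - 3 + 1/8) 3 != 0.
  by rewrite c mulf_neq0 // ?oppr_eq0 ?gt0_neq0.
rewrite {1}e (poch_solveL _ _ _ hnz) c.
rfield; nz.
Qed.

Lemma R3 (X : rat) k : 0 <= X -> poch (3*X + 11/8) k =
  poch (3*X + 11/8) 3 * poch (3*X + 11/8 + 3%:R) k / poch (3*X + 11/8 + k%:R) 3.
Proof.
move=> hX; rewrite (poch_solveR _ 3 k) //; apply: gt0_neq0; apply: poch_gt0.
have hk : 0 <= (k%:R : rat) by [].
posc.
Qed.

Lemma R4 (X : rat) k : 0 <= X -> poch (4*X + 3/2) k =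
  poch (4*X + 3/2) 4 * poch (4*X + 3/2 + 4%:R) k / poch (4*X + 3/2 + k%:R) 4.
Proof.
move=> hX; rewrite (poch_solveR _ 4 k) //; apply: gt0_neq0; apply: poch_gt0.
have hk : 0 <= (k%:R : rat) by [].
posc.
Qed.

Definition t (n k : nat) : rat :=
     (-1) ^+ k * (4 * k%:R + 1) *
     (poch (- (4 * n%:R)) k * poch (- (3 * n%:R) + 1 / 8) k * poch (1 / 2) k /
      ((k`!)%:R * poch (3 * n%:R + 11 / 8) k * poch (4 * n%:R + 3 / 2) k)).

Definition Bf (n k : nat) : rat :=
 (-1)^+k * poch (-(4*n%:R) - 4) k * poch (-(3*n%:R) - 3 + 1/8) k * poch (1/2) k /
 ((k`!)%:R * poch (3*n%:R + 11/8 + 3%:R) k * poch (4*n%:R + 3/2 + 4%:R) k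
   * poch (3*n%:R + 11/8) 3 * poch (4*n%:R + 3/2) 4).

Definition Gf (n k : nat) : rat := Bf n k * bmm n%:R k%:R * yv n%:R k%:R.

Lemma S1 n k : poch (-(4*(n.+1)%:R)) k = poch (-(4*n%:R) - 4) k.
Proof. congr (poch _ _); rewrite -[(n.+1)%:R]natr1; rring. Qed.
Lemma S2 n k : poch (-(3*(n.+1)%:R) + 1/8) k = poch (-(3*n%:R) - 3 + 1/8) k.
Proof. congr (poch _ _); rewrite -[(n.+1)%:R]natr1; rring. Qed.
Lemma S3 n k : poch (3*(n.+1)%:R + 11/8) k = poch (3*n%:R + 11/8 + 3%:R) k.
Proof. congr (poch _ _); rewrite -[(n.+1)%:R]natr1; rring. Qed.
Lemma S4 n k : poch (4*(n.+1)%:R + 3/2) k = poch (4*n%:R + 3/2 + 4%:R) k.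
Proof. congr (poch _ _); rewrite -[(n.+1)%:R]natr1; rring. Qed.

Definition Bx (n k : nat) : rat :=
 (-1)^+k * poch (-(4*n%:R) - 4) k * poch (-(3*n%:R) - 3 + 1/8) k * poch (1/2) k /
 ((k`!)%:R * poch (3*n%:R + 11/8 + 3%:R) k * poch (4*n%:R + 3/2 + 4%:R) k
   * ((3*n%:R + 11/8) * (3*n%:R + 11/8 + 1) * (3*n%:R + 11/8 + 2))
   * ((4*n%:R + 3/2) * (4*n%:R + 3/2 + 1) * (4*n%:R + 3/2 + 2) * (4*n%:R + 3/2 + 3))).

Lemma step n k : t n.+1 k - rfun n%:R * t n k = Gf n k.+1 - Gf n k.
Proof.
have hX : 0 <= (n%:R : rat) := ler0n _ _.
have hK : 0 <= (k%:R : rat) := ler0n _ _.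
have hF : 0 < ((k`!)%:R : rat) by rewrite ltr0n fact_gt0.
have hD1 : 0 < poch (3*n%:R + 11/8 + 3%:R) k by apply: poch_gt0; posc.
have hD2 : 0 < poch (4*n%:R + 3/2 + 4%:R) k by apply: poch_gt0; posc.
rewrite /t /Gf /Bf.
rewrite S1 S2 S3 S4.
rewrite !(poch_S _ k) exprS factS natrM.
rewrite -[(k.+1)%:R]natr1.
rewrite (R1 n%:R k hX).
rewrite (R2 n%:R k hX).
rewrite (R3 n%:R k hX).
rewrite (R4 n%:R k hX).
rewrite !poch3 !poch4.
transitivity (Bx n k * (pp2 n%:R k%:R - rfun n%:R * pp1 n%:R k%:R)).
  rewrite /Bx /pp1 /pp2. rfield. nz.
transitivity (Bx n k * (aa n%:R k%:R * yv n%:R (k%:R + 1) - bmm n%:R k%:R * yv n%:R k%:R)).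
  exact: (congr1 (fun z => Bx n k * z) (PL n%:R k%:R hX hK)).
rewrite /Bx /aa /bmm. rfield. nz.
Qed.

Lemma t_vanish n k : (4 * n < k)%N -> t n k = 0.
Proof.
move=> h.
have h0 : poch (- (4 * n%:R)) k = 0.
  apply: (poch_zero _ _ (4 * n) h); rewrite natrM; rring.
by rewrite /t h0 !mul0r mulr0.
Qed.

Lemma S_stable n N : (4 * n <= N)%N ->
  \sum_(k < N.+1) t n k = \sum_(k < (4 * n).+1) t n k.
Proof.
move=> h; rewrite -!(big_mkord xpredT) (@big_cat_nat _ _ _ (4 * n).+1 0 N.+1) //=.
rewrite [X in _ + X]big1_seq ?addr0 // => k /andP[_].
by rewrite mem_index_iota => /andP[hk _]; apply: t_vanish.
Qed.

Lemma G0 n : Gf n 0 = 0.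
Proof. rewrite /Gf /bmm; rring. Qed.

Lemma Gend n : Gf n (4 * n.+1).+1 = 0.
Proof.
have h0 : poch (-(4*n%:R) - 4) (4 * n.+1).+1 = 0.
  apply: (poch_zero _ _ (4 * n.+1)) => //.
  rewrite natrM -[(n.+1)%:R]natr1; rring.
rewrite /Gf /Bf h0; rring.
Qed.

Lemma S_rec n : \sum_(k < (4 * n.+1).+1) t n.+1 k =
  rfun n%:R * \sum_(k < (4 * n.+1).+1) t n k.
Proof.
apply/eqP; rewrite -subr_eq0 mulr_sumr -sumrB -(big_mkord xpredT (fun k => t n.+1 k - rfun n%:R * t n k)).
by rewrite (telescope_sumr_eq (Gf n) (fun k => t n.+1 k - rfun n%:R * t n k) (leq0n _) (fun k _ => step n k)) Gend G0 subrr.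
Qed.

Definition RHS (n : nat) : rat := ((2 ^+ 8 * 3 ^+ 3) / 7 ^+ 7) ^+ n *
    (poch (11 / 24) n * poch (3 / 8) n * poch (7 / 8) n * poch (19 / 24) n *
       poch (9 / 8) n ^+ 2 /
     (poch (11 / 56) n * poch (43 / 56) n * poch (19 / 56) n * poch (51 / 56) n *
       poch (27 / 56) n * poch (59 / 56) n)).

Lemma RHS_rec n : RHS n.+1 = rfun n%:R * RHS n.
Proof.
have hX : 0 <= (n%:R : rat) := ler0n _ _.
have h1 : 0 < poch (11/56) n by apply: poch_gt0; posc.
have h2 : 0 < poch (43/56) n by apply: poch_gt0; posc.
have h3 : 0 < poch (19/56) n by apply: poch_gt0; posc.
have h4 : 0 < poch (51/56) n by apply: poch_gt0; posc.
have h5 : 0 < poch (27/56) n by apply: poch_gt0; posc.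
have h6 : 0 < poch (59/56) n by apply: poch_gt0; posc.
rewrite /RHS !(poch_S _ n) exprSr /rfun.
rfield; nz.
Qed.

Lemma main_id n : \sum_(k < (4 * n).+1) t n k = RHS n.
Proof.
elim: n => [|n IH].
  rewrite big_ord1 /t /RHS !poch0 !expr0 fact0 -[nat_of_ord _]/0%N. rfield; nz.
rewrite S_rec RHS_rec -IH S_stable //.
by rewrite leq_mul2l leqnSn orbT.
Qed.

Theorem theorem10 (n : nat) (N : nat) (hN : (4 * n <= N)%N) :
  \sum_(k < N.+1)
     (-1) ^+ k * (4 * k%:R + 1) *
     (poch (- (4 * n%:R)) k * poch (- (3 * n%:R) + 1 / 8) k * poch (1 / 2) k /
      ((k`!)%:R * poch (3 * n%:R + 11 / 8) k * poch (4 * n%:R + 3 / 2) k))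
  = ((2 ^+ 8 * 3 ^+ 3) / 7 ^+ 7) ^+ n *
    (poch (11 / 24) n * poch (3 / 8) n * poch (7 / 8) n * poch (19 / 24) n *
       poch (9 / 8) n ^+ 2 /
     (poch (11 / 56) n * poch (43 / 56) n * poch (19 / 56) n * poch (51 / 56) n *
       poch (27 / 56) n * poch (59 / 56) n)).
Proof.
exact: (etrans (S_stable n N hN) (main_id n)).
Qed.
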